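(* For every collection $A$, the set of pure Nash equilibrium outcomes of the game $\Gamma_{\mathcal{CUDD}}(A)$ is exactly $AG(A)\cup DIS(A)$, where $$AG(A)=\Big\{a\in A:\ a_i\ge\tfrac{\overline{m}_i+\underline{m}_i}{2}\text{ for } i=1,2\Big\},\qquad DIS(A)=\Big\{\tfrac{b+c}{2}:\ b\in A^1_{max},\ c\in A^2_{max}\Big\}.$$
   Context: Two players bargain over a collection (multiset) $A=(a^k)_{k\in[n]}$, $a^k=(a^k_1,a^k_2)\in[0,1]^2$, $a^k_i$ being player $i$'s utility; players are risk neutral and the outcome of a profile is the vector of expected utilities. Mechanism $\mathcal{CUDD}$ (coordination with uniform dictatorial disagreement): each player $i$ submits a pair $(g_i,d_i)\in[n]^2$; if $g_1=g_2$ the chosen index is $g_1$, otherwise the index is uniform over $\{d_1,d_2\}$ (i.e., each of $d_1,d_2$ with probability $1/2$, so $d_1$ with probability 1 if $d_1=d_2$). $\overline{m}_i=\max_k a^k_i$, $\underline{m}_i=\min_k a^k_i$, and $A^i_{max}=\{a^k\in A: a^k_i=\overline{m}_i\}$. *)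

(* Defs.v *)
From HB Require Import structures.
From mathcomp Require Import all_boot all_order all_algebra.
Set Implicit Arguments. Unset Strict Implicit. Unset Printing Implicit Defensive.
Import Order.TTheory GRing.Theory Num.Theory.
Local Open Scope ring_scope.

Section CUDD.
Variables (R : realFieldType) (n : nat).
(* The collection A = (a^k)_{k in [n]} with n >= 1, indexed by 'I_n.+1;
   (a k).1 = a^k_1, (a k).2 = a^k_2. *)
Variable a : 'I_n.+1 -> R * R.

Definition strat := ('I_n.+1 * 'I_n.+1)%type.

(* Outcome (vector of expected utilities) of the profile (s1, s2) under CUDD. *)
Definition outcome (s1 s2 : strat) : R * R :=
  if s1.1 == s2.1 then a s1.1
  else (((a s1.2).1 + (a s2.2).1) / 2, ((a s1.2).2 + (a s2.2).2) / 2).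

Definition is_pure_NE (s1 s2 : strat) : Prop :=
  (forall t1 : strat, (outcome t1 s2).1 <= (outcome s1 s2).1) /\
  (forall t2 : strat, (outcome s1 t2).2 <= (outcome s1 s2).2).

Definition NE_outcome (x : R * R) : Prop :=
  exists s1 s2 : strat, is_pure_NE s1 s2 /\ outcome s1 s2 = x.

Definition mmax (f : 'I_n.+1 -> R) : R := \big[Num.max/f ord0]_k f k.
Definition mmin (f : 'I_n.+1 -> R) : R := \big[Num.min/f ord0]_k f k.
Definition mbar1 := mmax (fun k => (a k).1).
Definition mbar2 := mmax (fun k => (a k).2).
Definition mund1 := mmin (fun k => (a k).1).
Definition mund2 := mmin (fun k => (a k).2).

Definition in_Amax1 (k : 'I_n.+1) : Prop := (a k).1 = mbar1.
Definition in_Amax2 (k : 'I_n.+1) : Prop := (a k).2 = mbar2.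

Definition AG (x : R * R) : Prop :=
  exists k, x = a k /\ (mbar1 + mund1) / 2 <= (a k).1
                    /\ (mbar2 + mund2) / 2 <= (a k).2.

Definition DIS (x : R * R) : Prop :=
  exists k l, in_Amax1 k /\ in_Amax2 l /\
    x = (((a k).1 + (a l).1) / 2, ((a k).2 + (a l).2) / 2).

End CUDD.

(* Main.v *)
Require Import Defs.
From HB Require Import structures.
From mathcomp Require Import all_boot all_order all_algebra.
From mathcomp Require Import lra.
Import Order.TTheory GRing.Theory Num.Theory.
Local Open Scope ring_scope.

Lemma mmax_ub (R : realFieldType) (n : nat) (f : 'I_n.+1 -> R) k : f k <= mmax f.
Proof.
rewrite /mmax.
have : k \in index_enum 'I_n.+1 by rewrite mem_index_enum.
elim: (index_enum _) => [|x r IH] //=.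
rewrite in_cons big_cons => /orP [/eqP ->|/IH H].
  by rewrite le_max lexx.
by rewrite le_max H orbT.
Qed.

Lemma mmin_lb (R : realFieldType) (n : nat) (f : 'I_n.+1 -> R) k : mmin f <= f k.
Proof.
rewrite /mmin.
have : k \in index_enum 'I_n.+1 by rewrite mem_index_enum.
elim: (index_enum _) => [|x r IH] //=.
rewrite in_cons big_cons => /orP [/eqP ->|/IH H].
  by rewrite ge_min lexx.
by rewrite ge_min H orbT.
Qed.

Lemma mmax_ex (R : realFieldType) (n : nat) (f : 'I_n.+1 -> R) : exists k, mmax f = f k.
Proof.
rewrite /mmax; apply: (big_ind (fun y => exists k, y = f k)).
- by exists ord0.
- move=> x y [i ->] [j ->]; case: (leP (f i) (f j)) => _; [by exists j | by exists i].
- by move=> i _; exists i.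
Qed.

Lemma mmin_ex (R : realFieldType) (n : nat) (f : 'I_n.+1 -> R) : exists k, mmin f = f k.
Proof.
rewrite /mmin; apply: (big_ind (fun y => exists k, y = f k)).
- by exists ord0.
- move=> x y [i ->] [j ->]; case: (leP (f i) (f j)) => _; [by exists i | by exists j].
- by move=> i _; exists i.
Qed.

Theorem proposition5 (R : realFieldType) (n : nat) (a : 'I_n.+1 -> R * R)
  (ha : forall k, 0 <= (a k).1 <= 1 /\ 0 <= (a k).2 <= 1) :
  forall x : R * R, NE_outcome a x <-> (AG a x \/ DIS a x).
Proof.
have ub1 k : (a k).1 <= mbar1 a by exact: (@mmax_ub _ _ (fun k => (a k).1) k).
have ub2 k : (a k).2 <= mbar2 a by exact: (@mmax_ub _ _ (fun k => (a k).2) k).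
have lb1 k : mund1 a <= (a k).1 by exact: (@mmin_lb _ _ (fun k => (a k).1) k).
have lb2 k : mund2 a <= (a k).2 by exact: (@mmin_lb _ _ (fun k => (a k).2) k).
have [M1 hM1] := (@mmax_ex _ _ (fun k => (a k).1)).
have [M2 hM2] := (@mmax_ex _ _ (fun k => (a k).2)).
have [N1 hN1] := (@mmin_ex _ _ (fun k => (a k).1)).
have [N2 hN2] := (@mmin_ex _ _ (fun k => (a k).2)).
rewrite -/(mbar1 a) in hM1; rewrite -/(mbar2 a) in hM2.
rewrite -/(mund1 a) in hN1; rewrite -/(mund2 a) in hN2.
move=> x; split.
- move=> [[g1 d1] [[g2 d2] [[H1 H2] <-]]].
  rewrite /outcome /=; case: eqP => [Eg|Eg].
  + left; exists g1; split => //; subst g2.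
    case: n a ha ub1 ub2 lb1 lb2 M1 hM1 M2 hM2 N1 hN1 N2 hN2 g1 d1 d2 H1 H2
      => [|n'] a ha ub1 ub2 lb1 lb2 M1 hM1 M2 hM2 N1 hN1 N2 hN2 g1 d1 d2 H1 H2.
    * have E : forall i : 'I_1, i = g1 by move=> i; rewrite (ord1 i) (ord1 g1).
      rewrite hM1 hM2 hN1 hN2 (E M1) (E M2) (E N1) (E N2); split; lra.
    * pose g' : 'I_n'.+2 := if g1 == ord0 then ord_max else ord0.
      have hg : g' != g1.
        rewrite /g'; case: (eqVneq g1 ord0) => [->|ne]; last by rewrite eq_sym.
        by apply/eqP => /(congr1 val).
      have := H1 (g', M1); have := H2 (g1, M2); have := H2 (g', M2).
      rewrite /outcome /= eqxx (negbTE hg) eq_sym (negbTE hg) /= => h1 _ h2.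
      move: (lb1 d2) (lb2 d1); rewrite hM1 hM2 hN1 hN2 => *; split; lra.
  + right; exists d1, d2; split; [|split => //].
    * have := H1 (g1, M1); rewrite /outcome /=.
      have -> : (g1 == g2) = false by apply/eqP.
      rewrite /in_Amax1 /= => h; have := ub1 d1; rewrite -hM1 in h *; lra.
    * have := H2 (g2, M2); rewrite /outcome /=.
      have -> : (g1 == g2) = false by apply/eqP.
      rewrite /in_Amax2 /= => h; have := ub2 d2; rewrite -hM2 in h *; lra.
- move=> [[k [-> [h1 h2]]]|[k [l [hk [hl ->]]]]].
  + exists (k, N2), (k, N1); split; last by rewrite /outcome /= eqxx.
    split.
    * move=> [t d] /=; rewrite /outcome /= eqxx; case: eqP => [E|_] /=; first by subst.
      have := ub1 d; rewrite hN1 in h1. lra.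
    * move=> [t d] /=; rewrite /outcome /= eqxx eq_sym; case: eqP => [E|_] /=; first by subst.
      have := ub2 d; rewrite hN2 in h2; lra.
  + rewrite /in_Amax1 /in_Amax2 in hk hl.
    case: (eqVneq k l) => [E|nkl]; first subst l.
    * exists (k, k), (k, k); split; last first.
        rewrite /outcome /= eqxx; case: (a k) => u v /=; congr pair; lra.
      split.
      - move=> [t d] /=; rewrite /outcome /= eqxx; case: eqP => [E|_] /=; first by subst.
        have := ub1 d; lra.
      - move=> [t d] /=; rewrite /outcome /= eqxx eq_sym; case: eqP => [E|_] /=; first by subst.
        have := ub2 d; lra.
    * exists (k, k), (l, l); split; last by rewrite /outcome /= (negbTE nkl).
      split.
      - move=> [t d] /=; rewrite /outcome /= (negbTE nkl); have := ub1 l; case: eqP => [E|_] /=; first subst.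
          lra.
        have := ub1 d; lra.
      - move=> [t d] /=; rewrite /outcome /= eq_sym (negbTE nkl) eq_sym; have := ub2 k; case: eqP => [E|_] /=; first subst.
          lra.
        have := ub2 d; lra.
Qed.
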